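(* Let $n\ge2$, $\lambda\in(-1,1)$, let $g$ be $\mathscr{R}$-admissible and $G$ be $\mathscr{G}$-admissible. There exists a constant $c=c(n,\lambda,g,G)$ such that $$\mathscr{R}(B^\lambda(m))\le c\,m,\qquad \mathscr{G}(B^\lambda(m))\le c\,m$$ for every $0<m\le|B^\lambda|$.
   Context: $|\cdot|$ is Lebesgue measure. $B^\lambda:=\{x\in B_1(0): x_n>\lambda\}$ and, for $m>0$, $B^\lambda(m):=\frac{m^{1/n}}{|B^\lambda|^{1/n}}(B^\lambda-\lambda e_n)$ (a truncated ball of volume $m$ lying in $\{x_n>0\}$). $\mathscr{R}(E):=\int_E\int_Eg(y-x)\,dy\,dx$, $\mathscr{G}(E):=\int_EG(x_n)\,dx$. $g:\mathbb{R}^n\setminus\{0\}\to(0,\infty)$ is $\mathscr{R}$-admissible if $\mathscr{R}(B_1)<\infty$, $B_1$ the unit ball at $0$. $G:(0,\infty)\to(0,\infty)$ is $\mathscr{G}$-admissible if $\sup_{t\in(0,2)}G(t)<\infty$ and $G(\alpha t)\le\alpha^nG(t)$ for all $\alpha>1,t>0$. *)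

(* Defs.v *)
(* R^n is modelled as n.-tuple R, which
   carries the product (Borel) sigma-algebra from measurable_structure.v.
   n-dimensional Lebesgue integration of nonnegative functions is defined by
   iterated one-dimensional Lebesgue integrals (Tonelli). *)
From HB Require Import structures.
From mathcomp Require Import all_boot all_order all_algebra.
From mathcomp Require Import all_classical all_reals all_analysis.
Set Implicit Arguments. Unset Strict Implicit. Unset Printing Implicit Defensive.
Import Order.TTheory GRing.Theory Num.Theory.
Local Open Scope classical_set_scope.
Local Open Scope ring_scope.

Section Defs.
Variable R : realType.

Fixpoint iint (n : nat) : (n.-tuple R -> \bar R) -> \bar R :=
  match n return (n.-tuple R -> \bar R) -> \bar R with
  | 0 => fun f => f [tuple]
  | k.+1 => fun f =>
      (\int[@lebesgue_measure R]_x iint (fun t : k.-tuple R => f (cons_tuple x t)))%E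
  end.

Definition leb (n : nat) (E : set (n.-tuple R)) : \bar R :=
  iint (fun x => (\1_E x)%:E).

Definition tsub n (x y : n.-tuple R) : n.-tuple R :=
  [tuple tnth x i - tnth y i | i < n].
Definition tscale n (c : R) (x : n.-tuple R) : n.-tuple R :=
  [tuple c * tnth x i | i < n].
Definition tnorm2 n (x : n.-tuple R) : R := \sum_(i < n) tnth x i ^+ 2.
Definition xlast n (x : n.-tuple R) : R := nth 0 x n.-1.
Definition elast n : n.-tuple R :=
  [tuple (if (i : nat) == n.-1 then 1 else 0) | i < n].

Definition unit_ball (n : nat) : set (n.-tuple R) := [set x | tnorm2 x < 1].

Definition Blam (n : nat) (lam : R) : set (n.-tuple R) :=
  [set x | @unit_ball n x /\ lam < xlast x].

Definition Blam_m (n : nat) (lam m : R) : set (n.-tuple R) :=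
  let s := powR (m / fine (leb (@Blam n lam))) (n%:R^-1) in
  [set tscale s (tsub x (tscale lam (elast n))) | x in @Blam n lam].

Definition Rfun n (g : n.-tuple R -> R) (E : set (n.-tuple R)) : \bar R :=
  iint (fun x => iint (fun y => ((\1_E x) * (\1_E y) * g (tsub y x))%:E)).

Definition Gfun n (G : R -> R) (E : set (n.-tuple R)) : \bar R :=
  iint (fun x => ((\1_E x) * G (xlast x))%:E).

Definition R_admissible n (g : n.-tuple R -> R) : Prop :=
  (forall x, x != [tuple of nseq n 0] -> 0 < g x) /\
  measurable_fun setT g /\
  (Rfun g (@unit_ball n) < +oo)%E.

Definition G_admissible (n : nat) (G : R -> R) : Prop :=
  (forall t, 0 < t -> 0 < G t) /\
  measurable_fun (`]0, +oo[%classic : set R) G /\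
  (exists M : R, forall t, 0 < t < 2 -> G t <= M) /\
  (forall alpha t, 1 < alpha -> 0 < t -> G (alpha * t) <= alpha ^+ n * G t).

End Defs.
Arguments unit_ball {R} n.
Arguments Blam {R} n lam.
Arguments Blam_m {R} n lam m.
Arguments G_admissible {R} n G.

(* Main.v *)
Require Import Defs.
From HB Require Import structures.
From mathcomp Require Import all_boot all_order all_algebra.
From mathcomp Require Import all_classical all_reals all_analysis.
From mathcomp Require Import ring lra.
Unset Printing Implicit Defensive.
Import Order.TTheory GRing.Theory Num.Theory.
Import HBNNSimple.
Local Open Scope classical_set_scope.
Local Open Scope ring_scope.

Section OneD.
Context {R : realType}.
Local Notation mu := (@lebesgue_measure R).
Local Open Scope ereal_scope.

Lemma ge0_int_sup (f : R -> \bar R) (X : \bar R) :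
  (forall x, 0 <= f x) ->
  (forall h : {nnsfun measurableTypeR R >-> R}, (forall x, (h x)%:E <= f x) -> sintegral mu h <= X) ->
  \int[mu]_x f x <= X.
Proof.
move=> f0 H; rewrite ge0_integralTE//; apply: ge_ereal_sup => _ [h /= hf <-].
exact: H.
Qed.

Lemma ge0_int_le (f h : R -> \bar R) :
  (forall x, 0 <= f x) -> (forall x, f x <= h x) ->
  \int[mu]_x f x <= \int[mu]_x h x.
Proof.
move=> f0 fh; have h0 x : 0 <= h x by apply: le_trans (fh x).
rewrite !ge0_integralTE//; apply: ereal_sup_le => _ [k /= kf <-].
by exists k => //= x; apply: le_trans (fh x).
Qed.

Lemma int_le (f h : R -> \bar R) :
  (forall x, 0 <= h x) -> (forall x, f x <= h x) ->
  \int[mu]_x f x <= \int[mu]_x h x.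
Proof.
move=> h0 fh; rewrite integralE.
rewrite -[X in _ <= X]sube0; apply: leeB; last exact: integral_ge0.
apply: ge0_int_le => x; first by exact: funepos_ge0.
by rewrite funeposE ge_max fh h0.
Qed.

Lemma mshift0 (a : R) : measurable_fun [set: R] (fun x : R => x - a)%R.
Proof. by apply: measurable_realfun.measurable_funD => //; exact: measurable_cst. Qed.

Lemma mshift (a : R) : measurable_fun (T := measurableTypeR R) (U := measurableTypeR R)
   [set: R] (fun x : R => x - a)%R.
Proof. exact: mshift0. Qed.

Lemma pushforward_shift (a : R) (A : set R) : measurable A ->
  pushforward mu (fun x : R => x - a)%R A = mu A.
Proof.
move=> mA.
have := @lebesgue_measure_unique R
  (measure_function_pushforward__canonical__measure_function_Measure mu (mshift a)).
move=> /(_ _ A mA) /= ->//= _ [[x1 x2]] _ <-.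
rewrite /pushforward.
have -> : (fun x : R => x - a)%R @^-1` `]x1, x2]%classic = `](x1 + a)%R, (x2 + a)%R]%classic.
  apply/seteqP; split => y /=; rewrite !in_itv /= => /andP[h1 h2];
    apply/andP; split; lra.
rewrite !lebesgue_measure_itv /= !lte_fin ltrD2r.
case: ifP => // _; rewrite -!EFinD; apply: congr1; lra.
Qed.

Lemma mint_shift (f : measurableTypeR R -> \bar R) (a : R) :
  measurable_fun (T := measurableTypeR R) (U := measurable_realfun.constructive_ereal_extended__canonical__measurable_structure_SigmaRing R) setT f -> (forall x, 0 <= f x) ->
  \int[mu]_x f (x - a)%R = \int[mu]_x f x.
Proof.
move=> mf f0.
have e1 := @ge0_integral_pushforward _ _ (measurableTypeR R) (measurableTypeR R) R (fun x : R => x - a)%R (mshift a) mu setT f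
  measurableT mf (fun y _ => f0 y).
rewrite preimage_setT in e1.
rewrite -e1.
apply: (eq_measure_integral mu); first exact: mshift.
move=> Hyp0 A mA _ /=.
exact: pushforward_shift.
Qed.

Lemma ge0_shift_le (f : R -> \bar R) (a : R) : (forall x, 0 <= f x) ->
  \int[mu]_x f (x - a)%R <= \int[mu]_x f x.
Proof.
move=> f0; apply: ge0_int_sup => [x|h hf]; first exact: f0.
rewrite -integralT_nnsfun.
have mh : measurable_fun (T := measurableTypeR R) (U := measurable_realfun.constructive_ereal_extended__canonical__measurable_structure_SigmaRing R) setT (EFin \o h).
  by apply/measurable_realfun.measurable_EFinP; exact: measurable_funPT.
rewrite -(mint_shift _ (- a)%R mh) => [|x]; last by rewrite /= lee_fin.
apply: ge0_int_le => [x|x] /=; first by rewrite lee_fin.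
by have := hf (x - - a)%R; rewrite opprK addrK.
Qed.

Lemma ge0_shift (f : R -> \bar R) (a : R) : (forall x, 0 <= f x) ->
  \int[mu]_x f (x - a)%R = \int[mu]_x f x.
Proof.
move=> f0; apply/le_anti/andP; split; first exact: ge0_shift_le.
have := ge0_shift_le (fun x => f (x - a)%R) (- a)%R (fun x => f0 _).
by under eq_integral do rewrite opprK addrK.
Qed.

Lemma int_shift (f : R -> \bar R) (a : R) :
  \int[mu]_x f (x - a)%R = \int[mu]_x f x.
Proof.
rewrite integralE [RHS]integralE.
congr (_ - _).
  rewrite -(ge0_shift (f^\+) a (funepos_ge0 _)).
  by apply: eq_integral => x _; rewrite !funeposE.
rewrite -(ge0_shift (f^\-) a (funeneg_ge0 _)).
by apply: eq_integral => x _; rewrite !funenegE.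
Qed.

Lemma int_le_but1 (fH fF : R -> \bar R) (p : R) :
  (forall x, 0 <= fH x) -> (forall x, x <> p -> fH x <= fF x) ->
  \int[mu]_x fH x <= \int[mu]_x fF x.
Proof.
move=> H0 HF.
have Fn : \int[mu]_x fF^\- x = 0.
  transitivity (\int[mu]_(x in [set p]) fF^\- x); last exact: integral_set1.
  rewrite [RHS]integral_mkcond; apply: eq_integral => x _.
  rewrite /patch; case: ifPn => // /negP; rewrite inE /= => xp.
  apply/eqP; rewrite eq_le; apply/andP; split; last by exact: funeneg_ge0.
  rewrite funenegE ge_max lexx andbT leeNl oppe0.
  by apply: le_trans (H0 x) (HF x xp).
rewrite [X in _ <= X]integralE Fn sube0.
apply: ge0_int_sup => [x|h hH]; first exact: H0.
rewrite -integralT_nnsfun.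
have mh : measurable_fun (T := measurableTypeR R) (U := measurable_realfun.constructive_ereal_extended__canonical__measurable_structure_SigmaRing R) setT (EFin \o h).
  by apply/measurable_realfun.measurable_EFinP; exact: measurable_funPT.
rewrite -(@integral_setD1 _ (EFin \o h) p setT); last 2 first.
- exact: measurableD.
- exact: measurable_funS mh.
rewrite [X in X <= _]integral_mkcond; apply: ge0_int_le => x.
  by rewrite /patch; case: ifPn => // _ /=; rewrite lee_fin.
rewrite /patch; case: ifPn => [|_]; last by exact: funepos_ge0.
rewrite inE /= => -[_ /= xp].
apply: le_trans (hH x) _; apply: le_trans (HF x xp) _.
by rewrite funeposE le_max lexx.
Qed.

End OneD.

Section Iint.
Context {R : realType}.
Local Notation mu := (@lebesgue_measure R).

Lemma tnth_cons0 k (x : R) (t : k.-tuple R) : tnth (cons_tuple x t) ord0 = x.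
Proof. by []. Qed.

Lemma tnth_consS k (x : R) (t : k.-tuple R) (j : 'I_k) :
  tnth (cons_tuple x t) (lift ord0 j) = tnth t j.
Proof. by rewrite !(tnth_nth 0). Qed.

Lemma tsub_cons k (x a : R) (t v : k.-tuple R) :
  tsub (cons_tuple x t) (cons_tuple a v) = cons_tuple (x - a) (tsub t v).
Proof.
apply: eq_from_tnth => i; rewrite tnth_mktuple.
case: (unliftP ord0 i) => [j ->|->]; last by rewrite !tnth_cons0.
by rewrite !tnth_consS tnth_mktuple.
Qed.

Local Open Scope ereal_scope.

Lemma iint_ge0 k (f : k.-tuple R -> \bar R) : (forall x, 0 <= f x) -> 0 <= iint f.
Proof.
elim: k f => [|k IH] f f0 /=; first exact: f0.
by apply: integral_ge0 => x _; apply: IH.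
Qed.

Lemma iint_le k (f h : k.-tuple R -> \bar R) :
  (forall x, 0 <= h x) -> (forall x, f x <= h x) -> iint f <= iint h.
Proof.
elim: k f h => [|k IH] f h h0 fh /=; first exact: fh.
apply: int_le => x; first by apply: iint_ge0.
by apply: IH.
Qed.

Lemma iint_shift k (f : k.-tuple R -> \bar R) (v : k.-tuple R) :
  iint (fun y => f (tsub y v)) = iint f.
Proof.
elim: k f v => [|k IH] f v /=.
  by congr (f _); apply: eq_from_tnth => -[].
have ev : v = cons_tuple (thead v) (behead_tuple v) := tuple_eta v.
rewrite ev.
transitivity (\int[mu]_x iint (fun t : k.-tuple R => f (cons_tuple (x - thead v)%R t))).
  apply: eq_integral => x _.
  rewrite -(IH (fun t => f (cons_tuple (x - thead v)%R t)) (behead_tuple v)).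
  by congr iint; apply: funext => t; rewrite tsub_cons.
exact: (int_shift _ (thead v)).
Qed.

Lemma iint0 k : iint (fun _ : k.-tuple R => 0) = 0.
Proof.
elim: k => [|k IH] //=.
by apply: integral0_eq => x _; rewrite IH.
Qed.

Lemma iint_le_diag k (H F : k.+1.-tuple R -> \bar R) (p : k.+1.-tuple R) :
  (forall y, 0 <= H y) -> (forall y, y <> p -> H y <= F y) -> iint H <= iint F.
Proof.
move=> H0 HF /=; apply: (int_le_but1 _ _ (thead p)) => [x|x xp].
  by apply: iint_ge0 => t.
have np t : cons_tuple x t <> p by move=> e; apply: xp; rewrite -e.
apply: iint_le => t; last exact: HF.
exact: le_trans (H0 _) (HF _ (np t)).
Qed.

Definition cube {k} (r : R) : set (k.-tuple R) := [set x | forall i, (`|tnth x i| < r)%R].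

Lemma cube_cons k r x (t : k.-tuple R) :
  cube r (cons_tuple x t) <-> ((`|x| < r)%R /\ cube r t).
Proof.
split.
  move=> H; split; first exact: (H ord0).
  by move=> j; have := H (lift ord0 j); rewrite tnth_consS.
move=> [hx ht] i; case: (unliftP ord0 i) => [j ->|->].
  by rewrite tnth_consS; exact: ht.
by rewrite tnth_cons0.
Qed.

Lemma indic_cube_cons k r x (t : k.-tuple R) :
  \1_(cube r) (cons_tuple x t) = (\1_(`](- r)%R, r[%classic) x * \1_(cube r) t)%R :> R.
Proof.
rewrite !indicE.
have itv : (x \in `](- r)%R, r[%classic) = (`|x| < r)%R.
  apply/idP/idP => [/set_mem /= h|h].
    by rewrite ltr_norml; move: h; rewrite in_itv.
  by apply/mem_set; rewrite /= in_itv /= -ltr_norml.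
have e1 : (cons_tuple x t \in cube r) = (`|x| < r)%R && (t \in cube r).
  apply/idP/andP => [/set_mem/cube_cons [h1 h2]|[h1 /set_mem h2]].
    by split => //; apply/mem_set.
  by apply/mem_set/cube_cons.
rewrite e1 itv.
by case: (`|x| < r)%R; case: (t \in cube r); rewrite ?mulr1 ?mulr0 ?mul0r.
Qed.

Lemma iint_cube k (r : R) (K : \bar R) : (0 < r)%R -> 0 <= K ->
  iint (fun x : k.-tuple R => (\1_(cube r) x)%:E * K) = ((2 * r) ^+ k)%:E * K.
Proof.
move=> r0; elim: k K => [|k IH] K K0 /=.
  by rewrite indicE mem_set // => -[].
transitivity (\int[mu]_x ((((2 * r) ^+ k)%:E * K) * (\1_(`](- r)%R, r[%classic) x)%:E)).
  apply: eq_integral => x _.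
  transitivity (iint (fun t : k.-tuple R =>
     (\1_(cube r) t)%:E * ((\1_(`](- r)%R, r[%classic) x)%:E * K))).
    congr iint; apply: funext => t.
    by rewrite indic_cube_cons EFinM muleAC muleC.
  rewrite IH; last by apply: mule_ge0 => //; rewrite lee_fin.
  by rewrite muleCA muleC.
rewrite ge0_integralZl //; last 2 first.
- by apply/measurable_realfun.measurable_EFinP; exact: measurable_realfun.measurable_indic.
- by apply: mule_ge0 => //; rewrite lee_fin exprn_ge0 // mulr_ge0 // ltW.
rewrite integral_indic // setIT.
transitivity (((2 * r) ^+ k)%:E * K * (2 * r)%:E).
  congr (_ * _).
  have := lebesgue_measure_itv (`](- r)%R, r[ : interval R).
  rewrite /= lte_fin ifT; last by rewrite -subr_gt0 opprK addr_gt0.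
  move=> ->; rewrite -EFinD; congr (_%:E).
  by rewrite opprK -mulr2n mulr2n mulrDl mul1r.
by rewrite exprS muleAC -EFinM mulrC.
Qed.

End Iint.

Section Tup.
Context {R : realType}.

Lemma tnth_tsub k (x y : k.-tuple R) i : tnth (tsub x y) i = tnth x i - tnth y i.
Proof. by rewrite tnth_mktuple. Qed.

Lemma tnth_tscale k (c : R) (x : k.-tuple R) i : tnth (tscale c x) i = c * tnth x i.
Proof. by rewrite tnth_mktuple. Qed.

Lemma tnth_elast k i : tnth (@elast R k) i = if (i : nat) == k.-1 then 1 else 0.
Proof. by rewrite tnth_mktuple. Qed.

Lemma sqr_le_tnorm2 k (x : k.-tuple R) i : tnth x i ^+ 2 <= tnorm2 x.
Proof.
rewrite /tnorm2 (bigD1 i) //= lerDl; apply: sumr_ge0 => j _; exact: sqr_ge0.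
Qed.

Lemma ball_coord k (x : k.-tuple R) i : tnorm2 x < 1 -> `|tnth x i| < 1.
Proof.
move=> h; have := sqr_le_tnorm2 _ x i => h2.
rewrite ltr_norml; apply/andP; split; nra.
Qed.

Lemma tnorm2_cube k (x : k.-tuple R) r : 0 <= r -> (forall i, `|tnth x i| < r) ->
  tnorm2 x <= k%:R * r ^+ 2.
Proof.
move=> r0 h; rewrite /tnorm2.
apply: (@le_trans _ _ (\sum_(i < k) r ^+ 2)).
  apply: ler_sum => i _; have hi := h i; have n0 := normr_ge0 (tnth x i).
  rewrite -real_normK ?num_real //; nra.
by rewrite sumr_const card_ord mulr_natl.
Qed.

Lemma tsub_eq0 k (y x : k.-tuple R) : tsub y x = [tuple of nseq k 0] -> y = x.
Proof.
move=> e; apply: eq_from_tnth => i.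
have := congr1 (fun t => tnth t i) e; rewrite tnth_tsub tnth_nseq => /eqP.
by rewrite subr_eq0 => /eqP.
Qed.

Lemma tsubsub k (x y w : k.-tuple R) : tsub (tsub y w) (tsub x w) = tsub y x.
Proof. by apply: eq_from_tnth => i; rewrite !tnth_tsub; ring. Qed.

Lemma xlastE k (x : k.+1.-tuple R) : xlast x = tnth x ord_max.
Proof. by rewrite /xlast (tnth_nth 0). Qed.

Lemma sum_elast2 k : \sum_(i < k.+1) tnth (@elast R k.+1) i ^+ 2 = 1.
Proof.
rewrite (bigD1 ord_max) //= tnth_elast /= eqxx expr1n big1 ?addr0 // => i hi.
rewrite tnth_elast ifF ?expr0n //; apply/negbTE.
by apply: contra hi => /eqP h; apply/eqP/val_inj; rewrite /= h.
Qed.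

End Tup.

Section Rp.
Context {R : realType}.

Definition gp {k} (g : k.-tuple R -> R) (z : k.-tuple R) : R := Num.max (g z) 0.

Lemma gp_ge0 {k} (g : k.-tuple R -> R) z : 0 <= gp g z.
Proof. by rewrite /gp le_max lexx orbT. Qed.

Lemma indic_ge0' T (A : set T) x : 0 <= \1_A x :> R.
Proof. by rewrite indicE; case: (_ \in _). Qed.

Lemma indic_sub T (A B : set T) x : A `<=` B -> \1_A x <= \1_B x :> R.
Proof.
move=> AB; rewrite !indicE; case: (boolP (x \in A)) => h; last by case: (_ \in _).
by rewrite mem_set //; apply: AB; exact: set_mem.
Qed.

Lemma indic_pre k (S : set (k.-tuple R)) w x :
  \1_[set z | S (tsub z w)] x = \1_S (tsub x w) :> R.
Proof.
by rewrite !indicE; congr (_%:R).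
Qed.

Definition Rp {k} (g : k.-tuple R -> R) (S : set (k.-tuple R)) : \bar R :=
  iint (fun x => iint (fun y => (\1_S x * \1_S y * gp g (tsub y x))%:E)).

Local Open Scope ereal_scope.

Lemma Rp_ge0 k g S : 0 <= @Rp k g S.
Proof.
apply: iint_ge0 => x; apply: iint_ge0 => y; rewrite lee_fin.
by rewrite !mulr_ge0 ?indic_ge0' ?gp_ge0.
Qed.

Lemma Rfun_le_Rp k g S : Rfun g S <= @Rp k g S.
Proof.
apply: iint_le => x.
  by apply: iint_ge0 => y; rewrite lee_fin !mulr_ge0 ?indic_ge0' ?gp_ge0.
apply: iint_le => y; first by rewrite lee_fin !mulr_ge0 ?indic_ge0' ?gp_ge0.
rewrite lee_fin; apply: ler_wpM2l; first by rewrite mulr_ge0 ?indic_ge0'.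
by rewrite /gp le_max lexx.
Qed.

Lemma Rp_mono k g S T : S `<=` T -> @Rp k g S <= Rp g T.
Proof.
move=> ST; apply: iint_le => x.
  by apply: iint_ge0 => y; rewrite lee_fin !mulr_ge0 ?indic_ge0' ?gp_ge0.
apply: iint_le => y; first by rewrite lee_fin !mulr_ge0 ?indic_ge0' ?gp_ge0.
rewrite lee_fin; apply: ler_wpM2r; first exact: gp_ge0.
by apply: ler_pM; rewrite ?indic_ge0' ?indic_sub.
Qed.

Lemma Rp_shift k g S w : @Rp k g [set z | S (tsub z w)] = Rp g S.
Proof.
rewrite /Rp.
pose Phi := fun x' : k.-tuple R =>
  iint (fun u => (\1_S x' * \1_S u * gp g (tsub u x'))%:E).
transitivity (iint (fun x => Phi (tsub x w))); last exact: iint_shift.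
congr iint; apply: funext => x.
rewrite /Phi -(iint_shift _ (fun u => (\1_S (tsub x w) * \1_S u * gp g (tsub u (tsub x w)))%:E) w).
by congr iint; apply: funext => y; rewrite !indic_pre tsubsub.
Qed.

Lemma Rp_le_Rfun k (g : k.+1.-tuple R -> R) S :
  (forall x, x != [tuple of nseq k.+1 0%R] -> (0 < g x)%R) ->
  Rp g S <= Rfun g S.
Proof.
move=> gpos.
have key x : iint (fun y => (\1_S x * \1_S y * gp g (tsub y x))%:E) <=
   iint (fun y => (\1_S x * \1_S y * g (tsub y x))%:E).
  apply: (iint_le_diag _ _ _ x) => y.
    by rewrite lee_fin !mulr_ge0 ?indic_ge0' ?gp_ge0.
  move=> yx; rewrite /gp max_l //; apply/ltW/gpos.
  by apply/eqP => /tsub_eq0.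
apply: iint_le => x; last exact: key.
apply: le_trans (key x); apply: iint_ge0 => y.
by rewrite lee_fin !mulr_ge0 ?indic_ge0' ?gp_ge0.
Qed.

End Rp.

Section Geo.
Context {R : realType}.

Lemma cube_mono k (x : k.-tuple R) r1 r2 : r1 <= r2 -> cube r1 x -> cube r2 x.
Proof. by move=> r12 h i; apply: lt_le_trans (h i) r12. Qed.

Lemma cube_add k (x y : k.-tuple R) r1 r2 :
  cube r1 x -> cube r2 (tsub y x) -> cube (r1 + r2) y.
Proof.
move=> hx hy i; have := hx i; have := hy i; rewrite tnth_tsub => h2 h1.
have -> : tnth y i = tnth x i + (tnth y i - tnth x i) by ring.
by apply: le_lt_trans (ler_normD _ _) _; rewrite ltrD.
Qed.

Lemma cube_sub k (x y : k.-tuple R) r : cube r x -> cube r y -> cube (r + r) (tsub y x).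
Proof.
move=> hx hy i; rewrite tnth_tsub; have := hx i; have := hy i => h2 h1.
by apply: le_lt_trans (ler_normB _ _) _; rewrite ltrD.
Qed.

Lemma conv_ball k (x : k.+1.-tuple R) (s lam : R) :
  tnorm2 x < 1 -> 0 < s <= 1 -> -1 < lam < 1 ->
  tnorm2 (tsub (tscale s (tsub x (tscale lam (@elast R k.+1)))) (tscale (- lam) (@elast R k.+1))) < 1.
Proof.
move=> hx /andP[s0 s1] /andP[l1 l2].
rewrite /tnorm2.
apply: (@le_lt_trans _ _ (\sum_(i < k.+1) (s * tnth x i ^+ 2 +
    (1 - s) * (lam ^+ 2 * tnth (@elast R k.+1) i ^+ 2)))).
  apply: ler_sum => i _; rewrite !tnth_tsub !tnth_tscale tnth_tsub tnth_tscale.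
  set a := tnth x i; set e := tnth (@elast R k.+1) i.
  have s1' : 0 <= 1 - s by rewrite subr_ge0.
  have := mulr_ge0 (mulr_ge0 (ltW s0) s1') (sqr_ge0 (a - lam * e)).
  nra.
rewrite big_split /= -mulr_sumr -mulr_sumr -mulr_sumr sum_elast2 mulr1.
rewrite -/(tnorm2 x).
have s1' : 0 <= 1 - s by rewrite subr_ge0.
have l3 : lam ^+ 2 < 1 by nra.
nra.
Qed.

End Geo.

Theorem lemma3p2 (R : realType) (n : nat) (lam : R)
    (g : n.-tuple R -> R) (G : R -> R) :
  (2 <= n)%N -> -1 < lam < 1 ->
  R_admissible g -> G_admissible n G ->
  exists c : R, forall m : R, 0 < m -> (m%:E <= leb (Blam n lam))%E ->
    (Rfun g (Blam_m n lam m) <= (c * m)%:E)%E /\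
    (Gfun G (Blam_m n lam m) <= (c * m)%:E)%E.
Proof.
case: n g => [//|n] g hn hlam [gpos [_ gfin]] [_ [_ [[M HM] _]]].
have /andP[lam1 lam2] := hlam.
pose L := leb (Blam n.+1 lam).
have L0 : (0 <= L)%E by apply: iint_ge0 => x; rewrite lee_fin indic_ge0'.
have Lle : (L <= ((2 * 1) ^+ n.+1)%:E)%E.
  rewrite -[X in (_ <= X)%E]mule1 -(iint_cube n.+1 1 1%:E ltr01) ?lee_fin //.
  apply: iint_le => x; first by rewrite mule1 lee_fin indic_ge0'.
  rewrite mule1 lee_fin; apply: indic_sub => y [hy _] i; exact: ball_coord.
have Lfin : L \is a fin_num by rewrite ge0_fin_numE // (le_lt_trans Lle) ?ltry.
pose l := fine L.
have Ll : L = l%:E by rewrite fineK.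
pose rho : R := (4 * n.+1%:R)^-1.
have rho0 : 0 < rho by rewrite invr_gt0 mulr_gt0.
have rhoN : rho * n.+1%:R = 4^-1.
  rewrite /rho; field; apply/eqP; have := ler0n R n; lra.
have rho_le : rho <= 4^-1.
  have h1 : (1:R) <= n.+1%:R by rewrite ler1n.
  rewrite -rhoN; nra.
have cubeB : cube (rho + rho) `<=` unit_ball n.+1.
  move=> x hx; rewrite /unit_ball /=.
  apply: le_lt_trans (tnorm2_cube _ x _ _ hx) _; first by rewrite ltW ?addr_gt0.
  nra.
pose K := iint (fun z => (\1_(cube rho) z * gp g z)%:E).
have K0 : (0 <= K)%E by apply: iint_ge0 => z; rewrite lee_fin mulr_ge0 ?indic_ge0' ?gp_ge0.
have hA : (Rp g (unit_ball n.+1) <= Rfun g (unit_ball n.+1))%E := Rp_le_Rfun _ _ _ gpos.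
have hKA : (((2 * rho) ^+ n.+1)%:E * K <= Rp g (unit_ball n.+1))%E.
  rewrite -iint_cube //.
  apply: iint_le => x.
    by apply: iint_ge0 => y; rewrite lee_fin !mulr_ge0 ?indic_ge0' ?gp_ge0.
  rewrite indicE; case: (boolP (x \in cube rho)) => hx; last first.
    by rewrite mul0e; apply: iint_ge0 => y; rewrite lee_fin !mulr_ge0 ?indic_ge0' ?gp_ge0.
  rewrite mul1e /K -(iint_shift _ _ x).
  apply: iint_le => y; first by rewrite lee_fin !mulr_ge0 ?indic_ge0' ?gp_ge0.
  rewrite lee_fin; case: (boolP (tsub y x \in cube rho)) => hy; last first.
    by rewrite indicE (negbTE hy) mul0r !mulr_ge0 ?indic_ge0' ?gp_ge0.
  have xB : unit_ball n.+1 x.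
    apply: cubeB; apply: (cube_mono _ _ rho); last exact: set_mem.
    by rewrite lerDl ltW.
  have yB : unit_ball n.+1 y by apply: cubeB; exact: (cube_add _ _ _ _ _ (set_mem hx) (set_mem hy)).
  by rewrite !indicE (mem_set xB) (mem_set yB) hy !mul1r.
have Aoo : (Rp g (unit_ball n.+1) < +oo)%E := le_lt_trans hA gfin.
have Kfin : K \is a fin_num.
  rewrite ge0_fin_numE // ltNge leye_eq; apply/negP => /eqP Ke.
  have pos : (0 < ((2 * rho) ^+ n.+1)%:E)%E.
    by rewrite lte_fin; apply: exprn_gt0; rewrite mulr_gt0.
  by have := le_lt_trans hKA Aoo; rewrite Ke muleC gt0_mulye // ltxx.
pose k := fine K.
have Kk : K = k%:E by rewrite /k fineK.
have k0 : 0 <= k by rewrite -lee_fin -Kk.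
have Afin : Rp g (unit_ball n.+1) \is a fin_num by rewrite ge0_fin_numE ?Rp_ge0.
pose a := fine (Rp g (unit_ball n.+1)).
have Aa : Rp g (unit_ball n.+1) = a%:E by rewrite /a fineK.
have a0 : 0 <= a by rewrite -lee_fin -Aa Rp_ge0.
pose M' := Num.max M 0.
have M'0 : 0 <= M' by rewrite le_max lexx orbT.
exists ((4 ^+ n.+1 / l) * (k + a / rho ^+ n.+1 + M')).
move=> m m0 mL.
have ml : m <= l by rewrite -lee_fin -Ll.
have l0 : 0 < l by apply: lt_le_trans ml.
pose s := powR (m / l) (n.+1%:R^-1).
have s0 : 0 < s by apply: powR_gt0; rewrite divr_gt0.
have sn : s ^+ n.+1 = m / l.
  rewrite /s -powR_mulrn ?powR_ge0 // -powRrM mulVf ?powRr1 // divr_ge0 // ltW //.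
have s1 : s <= 1.
  have h := (expr_lte1 R).1 n.+1 s isT (ltW s0).
  by rewrite -h sn ler_pdivrMr // mul1r.
pose w := tscale (- lam) (@elast R n.+1).
pose F := Blam_m n.+1 lam m.
have hF0 : forall z, F z -> exists2 x, Blam n.+1 lam x &
    z = tscale s (tsub x (tscale lam (@elast R n.+1))).
  by move=> z [x hx <-]; exists x.
have hF : forall z, F z ->
    [/\ cube (s + s) z, unit_ball n.+1 (tsub z w) & 0 < xlast z < 2].
  move=> z /hF0 [x [hx hlx] ->]; split.
  - move=> i; rewrite tnth_tscale tnth_tsub tnth_tscale tnth_elast.
    have := ball_coord _ x i hx; rewrite ltr_norml => /andP[h1 h2].
    rewrite ltr_norml; case: ifP => _; apply/andP; split; nra.
  - rewrite /unit_ball /w /=; apply: conv_ball => //; by rewrite s0 s1.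
  - rewrite xlastE tnth_tscale tnth_tsub tnth_tscale tnth_elast /= eqxx mulr1.
    rewrite xlastE in hlx.
    have := ball_coord _ x ord_max hx; rewrite ltr_norml => /andP[h1 h2].
    apply/andP; split; nra.
pose Q := 4 ^+ n.+1 / l * m.
have Qe : Q = (2 * (s + s)) ^+ n.+1.
  rewrite (_ : 2 * (s + s) = 4 * s); last by ring.
  by rewrite exprMn sn /Q mulrA mulrAC.
have Q0 : 0 <= Q by rewrite Qe exprn_ge0 // mulr_ge0 // addr_ge0 // ltW.
have cE : 4 ^+ n.+1 / l * (k + a / rho ^+ n.+1 + M') * m =
    Q * (k + a / rho ^+ n.+1 + M') by rewrite /Q mulrAC.
have ar0 : 0 <= a / rho ^+ n.+1 by rewrite divr_ge0 // exprn_ge0 // ltW.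
rewrite cE; split.
- apply: le_trans (Rfun_le_Rp _ _ _) _.
  case: (leP ((s + s) + (s + s)) rho) => hs.
  + apply: (@le_trans _ _ (((2 * (s + s)) ^+ n.+1)%:E * K)%E).
      rewrite -iint_cube ?addr_gt0 //; apply: iint_le => x.
        by rewrite mule_ge0 ?lee_fin ?indic_ge0'.
      case: (pselect (F x)) => Fx; last first.
        rewrite (_ : (fun y => _) = fun _ => 0%E); first by rewrite iint0 mule_ge0 ?lee_fin ?indic_ge0'.
        by apply: funext => y; rewrite indicE memNset // !mul0r.
      have [cx _ _] := hF x Fx.
      rewrite [\1_(cube (s + s)) x]indicE (mem_set cx) mul1e /K -[X in (_ <= X)%E](iint_shift _ _ x).
      apply: iint_le => y; first by rewrite lee_fin mulr_ge0 ?indic_ge0' ?gp_ge0.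
      rewrite lee_fin; case: (pselect (F y)) => Fy; last first.
        by rewrite [\1_(Blam_m _ _ _) y]indicE memNset // mulr0 mul0r mulr_ge0 ?indic_ge0' ?gp_ge0.
      have [cy _ _] := hF y Fy.
      have cxy : cube rho (tsub y x) by apply: (cube_mono _ _ _ _ hs); exact: cube_sub.
      by rewrite !indicE !mem_set // !mul1r.
    rewrite Kk -EFinM lee_fin -Qe; apply: ler_wpM2l => //.
    lra.
  + apply: (@le_trans _ _ (Rp g (unit_ball n.+1))).
      rewrite -(Rp_shift _ g (unit_ball n.+1) w); apply: Rp_mono => z Fz.
      by have [_ ? _] := hF z Fz.
    rewrite Aa lee_fin.
    have Qr : rho ^+ n.+1 <= Q.
      have r1 : rho <= 2 * (s + s) by lra.
      have r2 : 0 <= 2 * (s + s) by lra.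
      by rewrite Qe; apply: lerXn2r; rewrite ?nnegrE // ltW.
    apply: (@le_trans _ _ (Q * (a / rho ^+ n.+1))).
      rewrite mulrA ler_pdivlMr ?exprn_gt0 //.
      by rewrite mulrC ler_wpM2r.
    by apply: ler_wpM2l => //; lra.
- rewrite /Gfun.
  apply: (@le_trans _ _ (iint (fun x => (\1_(cube (s + s)) x)%:E * M'%:E)%E)).
    apply: iint_le => x; first by rewrite mule_ge0 ?lee_fin ?indic_ge0'.
    rewrite -EFinM lee_fin; case: (pselect (F x)) => Fx; last first.
      by rewrite indicE memNset // mul0r mulr_ge0 ?indic_ge0'.
    have [cx _ /andP[x0 x2]] := hF x Fx.
    rewrite !indicE !mem_set // !mul1r.
    by apply: le_trans (HM _ _) _; [rewrite x0 x2 | rewrite le_max lexx].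
  rewrite iint_cube ?addr_gt0 ?lee_fin // -Qe.
  by apply: ler_wpM2l => //; lra.
Qed.
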